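(* Let $\mathcal C$ be a category of $\mathcal A$-coloured noncrossing partitions, let $p\in\mathcal C(w,\emptyset)$ be a partition lying on one line and let $q$ be a full subpartition of $p$, regarded as a partition in $NC^{\mathcal A}(w_a w_{a+1}\cdots w_{a+b},\emptyset)$. Then $q^*q\in\mathcal C(w_a\cdots w_{a+b}, w_a\cdots w_{a+b})$.
   Context: Colour sets and partitions: a colour set is a set $\mathcal A$ with an involution $a\mapsto a^{-1}$. For words $w,w'$ on $\mathcal A$, an element of $P^{\mathcal A}(w,w')$ is a partition of $|w|+|w'|$ points drawn as an upper row coloured (left to right) by $w$ and a lower row coloured by $w'$; its subsets are blocks. It is noncrossing if there are no four points $k_1<k_2<k_3<k_4$ (ordering: upper row left to right, then lower row right to left) with $k_1,k_3$ in one block and $k_2,k_4$ in a different block. Category operations: tensor product (horizontal juxtaposition), composition $qp$ (stack $q$ below $p$, erase middle points and closed loops), adjoint $p^*$ (reflection in a horizontal axis, exchanging rows), rotation (moving an extreme point to the same end of the other row and replacing its colour $a$ by $a^{-1}$). A category of noncrossing partitions is a family $\mathcal C(w,w')\subset NC^{\mathcal A}(w,w')$ stable under these operations and containing $\pi(a,a)$ for all $a$. A partition lies on one line if it has no lower points. For $p\in P(w,\emptyset)$ with points $1,\dots,k$, a full subpartition is a union $q$ of blocks of $p$ whose set of points is an interval $\{a,a+1,\dots,a+b\}$ with $1\leqslant a\leqslant a+b\leqslant k$. *)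

(* Defs.v *)
(* Points of a partition in P(w,w') are numbered 0 .. |w|+|w'|-1:
   upper row left to right = 0 .. |w|-1, lower row left to right = |w| .. |w|+|w'|-1.
   A partition is a set of blocks {set {set 'I_n}} forming a partition of [set: 'I_n].
   Operations are defined via the induced equivalence relation on point indices. *)
From HB Require Import structures.
From mathcomp Require Import all_boot.
Set Implicit Arguments. Unset Strict Implicit. Unset Printing Implicit Defensive.

Definition pset (n : nat) := {set {set 'I_n}}.

Definition is_part n (P : pset n) : bool := partition P [set: 'I_n].

Definition same n (P : pset n) (i j : nat) : bool :=
  [exists B in P, [exists x in B, [exists y in B, (val x == i) && (val y == j)]]].

Definition mkpart n (r : nat -> nat -> bool) : pset n :=
  equivalence_partition (fun x y : 'I_n => r (val x) (val y)) [set: 'I_n].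

(* transport along a point map f (new index -> old index) *)
Definition pull m n (f : nat -> nat) (P : pset n) : pset m :=
  mkpart m (fun i j => same P (f i) (f j)).

(* position of point x in the cyclic order (upper left-to-right, then lower
   right-to-left), for a partition in P(w,w') with |w| = k, |w'| = l *)
Definition cpos (k l x : nat) : nat := if x < k then x else k + l - 1 - (x - k).

Definition noncrossing k l (P : pset (k + l)) : bool :=
  [forall x1 : 'I_(k + l), forall x2 : 'I_(k + l), forall x3 : 'I_(k + l),
   forall x4 : 'I_(k + l),
     ~~ [&& cpos k l x1 < cpos k l x2, cpos k l x2 < cpos k l x3,
            cpos k l x3 < cpos k l x4, same P x1 x3, same P x2 x4 &
            ~~ same P x1 x2]].

Definition is_nc k l (P : pset (k + l)) : bool := is_part P && noncrossing P.

Section Ops.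
Variable A : Type.

Definition tens_side (k1 l1 k2 : nat) (x : nat) : bool * nat :=
  if x < k1 then (true, x)
  else if x < k1 + k2 then (false, x - k1)
  else if x < k1 + k2 + l1 then (true, k1 + (x - k1 - k2))
  else (false, k2 + (x - k1 - k2 - l1)).

Definition tensor (w1 w1' w2 w2' : seq A)
    (p : pset (size w1 + size w1')) (q : pset (size w2 + size w2')) :
    pset (size (w1 ++ w2) + size (w1' ++ w2')) :=
  mkpart _ (fun i j =>
    let si := tens_side (size w1) (size w1') (size w2) i in
    let sj := tens_side (size w1) (size w1') (size w2) j in
    (si.1 == sj.1) &&
    (if si.1 then same p si.2 sj.2 else same q si.2 sj.2)).

Definition adjoint (w w' : seq A) (p : pset (size w + size w')) :
    pset (size w' + size w) :=
  pull _ (fun x => if x < size w' then size w + x else x - size w') p.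

(* composition q p: p in P(w,w'), q in P(w',w''), q stacked below p *)
Definition comp_edge (w w' w'' : seq A)
    (p : pset (size w + size w')) (q : pset (size w' + size w'')) (i j : nat) : bool :=
  let n1 := size w + size w' in
  [|| [&& i < n1, j < n1 & same p i j],
      [&& n1 <= i, n1 <= j & same q (i - n1) (j - n1)],
      [&& size w <= i, i < n1 & j == n1 + (i - size w)] |
      [&& size w <= j, j < n1 & i == n1 + (j - size w)]].

Definition part_comp (w w' w'' : seq A)
    (q : pset (size w' + size w'')) (p : pset (size w + size w')) :
    pset (size w + size w'') :=
  let n1 := size w + size w' in
  let N := n1 + (size w' + size w'') in
  let g x := if x < size w then x else n1 + size w' + (x - size w) in
  mkpart _ (fun i j =>
    [exists x : 'I_N, exists y : 'I_N,
       [&& val x == g i, val y == g j &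
           connect (fun a b : 'I_N => comp_edge p q (val a) (val b)) x y]]).

Definition idpart : pset 2 := mkpart 2 (fun _ _ => true).

End Ops.

(* rotations (4 kinds); b is the new colour (instantiated with a^-1 below) *)
Definition rot_ul (A : Type) (a b : A) (w w' : seq A)
    (p : pset (size (a :: w) + size w')) : pset (size w + size (b :: w')) :=
  pull _ (fun x => if x < size w then x.+1
                   else if x == size w then 0 else x) p.
Definition rot_ur (A : Type) (a b : A) (w w' : seq A)
    (p : pset (size (w ++ [:: a]) + size w')) : pset (size w + size (w' ++ [:: b])) :=
  pull _ (fun x => if x < size w then x
                   else if x < size w + size w' then x.+1
                   else size w) p.
Definition rot_ll (A : Type) (a b : A) (w w' : seq A)
    (p : pset (size w + size (a :: w'))) : pset (size (b :: w) + size w') :=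
  pull _ (fun x => if x == 0 then size w
                   else if x <= size w then x.-1 else x) p.
Definition rot_lr (A : Type) (a b : A) (w w' : seq A)
    (p : pset (size w + size (w' ++ [:: a]))) : pset (size (w ++ [:: b]) + size w') :=
  pull _ (fun x => if x < size w then x
                   else if x == size w then size w + size w'
                   else x.-1) p.

Definition pcat_family (A : Type) := forall w w' : seq A, pset (size w + size w') -> Prop.

Record category_of_nc_partitions (A : Type) (inv : A -> A) (C : pcat_family A) : Prop := {
  cat_nc : forall w w' p, C w w' p -> is_nc p;
  cat_tensor : forall w1 w1' w2 w2' p q, C w1 w1' p -> C w2 w2' q ->
          C (w1 ++ w2) (w1' ++ w2') (tensor p q);
  cat_comp : forall w w' w'' p q, C w w' p -> C w' w'' q -> C w w'' (part_comp q p);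
  cat_adj : forall w w' p, C w w' p -> C w' w (adjoint p);
  cat_rot_ul : forall a w w' p, C (a :: w) w' p -> C w (inv a :: w') (rot_ul (inv a) p);
  cat_rot_ur : forall a w w' p, C (w ++ [:: a]) w' p -> C w (w' ++ [:: inv a]) (rot_ur (inv a) p);
  cat_rot_ll : forall a w w' p, C w (a :: w') p -> C (inv a :: w) w' (rot_ll (inv a) p);
  cat_rot_lr : forall a w w' p, C w (w' ++ [:: a]) p -> C (w ++ [:: inv a]) w' (rot_lr (inv a) p);
  cat_id : forall a, C [:: a] [:: a] idpart }.

(* q is a full subpartition of p (one line, points 0..size w - 1) on the
   0-indexed interval a .. a+b: a union of blocks of p whose points are
   exactly that interval. *)
Definition full_subpartition_on n (P : pset n) (Q : {set {set 'I_n}}) (a b : nat) : Prop :=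
  [/\ Q \subset P, a + b < n & cover Q = [set x : 'I_n | a <= val x <= a + b]].

(* the full subpartition Q, regarded as a partition of the subword w_a..w_(a+b)
   on points 0..b (point i corresponds to point a+i of p) *)
Definition restrict_part m n (Q : {set {set 'I_n}}) (a : nat) : pset m :=
  mkpart m (fun i j => same Q (a + i) (a + j)).

(* Main.v *)
Require Import Defs.
From HB Require Import structures.
From mathcomp Require Import all_boot.
From mathcomp Require Import zify.
Set Implicit Arguments. Unset Strict Implicit. Unset Printing Implicit Defensive.

Lemma sameE n (P : pset n) i j : reflect (exists B x y, [/\ B \in P, x \in B, y \in B, val x = i & val y = j]) (same P i j).
Proof.
apply: (iffP existsP).
  case=> B /andP[BP /existsP[x /andP[xB /existsP[y /andP[yB /andP[/eqP ex /eqP ey]]]]]].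
  by exists B, x, y.
case=> B [x [y [BP xB yB ex ey]]]; exists B; rewrite BP /=; apply/existsP; exists x; rewrite xB /=.
by apply/existsP; exists y; rewrite yB ex ey !eqxx.
Qed.

Lemma same_lt n (P : pset n) i j : same P i j -> i < n /\ j < n.
Proof. move/sameE=> [B [x [y [_ _ _ ex ey]]]]. subst i j. by split; apply: ltn_ord. Qed.

Lemma same_sym n (P : pset n) i j : same P i j -> same P j i.
Proof. by move/sameE=> [B [x [y [BP xB yB ex ey]]]]; apply/sameE; exists B, y, x. Qed.

Lemma sameP n (P : pset n) (x y : 'I_n) B : B \in P -> x \in B -> y \in B -> same P x y.
Proof. by move=> BP xB yB; apply/sameE; exists B, x, y. Qed.

Lemma same_refl n (P : pset n) i : is_part P -> i < n -> same P i i.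
Proof.
move=> /and3P[/eqP cov _ _] lt.
have : Ordinal lt \in cover P by rewrite cov inE.
case/bigcupP=> B BP xB; exact: (sameP BP xB xB).
Qed.

Lemma same_trans n (P : pset n) i j k : is_part P -> same P i j -> same P j k -> same P i k.
Proof.
move=> /and3P[_ tI _].
move/sameE=> [B [x [y [BP xB yB ex ey]]]].
move/sameE=> [B' [x' [y' [BP' xB' yB' ex' ey']]]].
have e : y = x' by apply: val_inj; rewrite ey ex'.
subst x'.
have eB : B = B' by rewrite -(def_pblock tI BP yB) (def_pblock tI BP' xB').
subst B'; apply/sameE; exists B, x, y'; done.
Qed.

Definition eqv n (r : nat -> nat -> bool) :=
  [/\ forall x, x < n -> r x x,
      forall x y, x < n -> y < n -> r x y -> r y x &
      forall x y z, x < n -> y < n -> z < n -> r x y -> r y z -> r x z].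

Lemma eqv_rel n r : eqv n r ->
  {in [set: 'I_n] & &, equivalence_rel (fun x y : 'I_n => r (val x) (val y))}.
Proof.
case=> rf sy tr x y z _ _ _; apply: pair; first exact: rf (ltn_ord z).
move=> rxy; apply/idP/idP => h.
  exact: (tr _ _ _ (ltn_ord y) (ltn_ord x) (ltn_ord z) (sy _ _ (ltn_ord x) (ltn_ord y) rxy) h).
exact: (tr _ _ _ (ltn_ord x) (ltn_ord y) (ltn_ord z) rxy h).
Qed.

Lemma mkpart_part n r : eqv n r -> is_part (mkpart n r).
Proof. by move=> e; apply: equivalence_partitionP; apply: eqv_rel. Qed.

Lemma same_mkpart n r i j : eqv n r ->
  same (mkpart n r) i j = [&& i < n, j < n & r i j].
Proof.
case=> rf sy tr; apply/idP/idP.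
  move/sameE=> [B [x [y [/imsetP[x0 _ ->] xB yB <- <-]]]].
  move: xB yB; rewrite !inE /= => r1 r2; rewrite !ltn_ord /=.
  by apply: tr (sy _ _ _ _ r1) r2.
case/and3P=> li lj rij.
apply: (@sameP _ _ (Ordinal li) (Ordinal lj) [set y in [set: 'I_n] | r i (val y)]).
- by apply/imsetP; exists (Ordinal li).
- by rewrite !inE /= rf.
- by rewrite !inE.
Qed.

Lemma part_eqv n (P : pset n) : is_part P -> eqv n (same P).
Proof.
move=> hP; split.
- by move=> x; apply: same_refl.
- by move=> x y _ _; apply: same_sym.
- by move=> x y z _ _ _; apply: same_trans.
Qed.

Lemma same_pull m n f (P : pset n) i j : is_part P -> (forall x, x < m -> f x < n) ->
  same (pull m f P) i j = [&& i < m, j < m & same P (f i) (f j)].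
Proof.
move=> hP hf; rewrite /pull same_mkpart //.
have [rf sy tr] := part_eqv hP; split.
- by move=> x /hf; apply: rf.
- by move=> x y /hf hx /hf hy; apply: sy.
- by move=> x y z /hf hx /hf hy /hf hz; apply: tr.
Qed.

Lemma mkpart_ext n (r1 r2 : nat -> nat -> bool) : (forall i j : 'I_n, r1 i j = r2 i j) -> mkpart n r1 = mkpart n r2.
Proof.
move=> h; rewrite /mkpart /equivalence_partition; apply: eq_imset => x.
by apply: eq_finset => y; rewrite h.
Qed.
Lemma is_part_C A inv (C : pcat_family A) (HC : category_of_nc_partitions inv C) w w' p :
  C w w' p -> is_part p.
Proof. by move=> /(cat_nc HC) /andP[]. Qed.

Lemma iter_ul A inv (C : pcat_family A) (HC : category_of_nc_partitions inv C) k :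
  forall (u u' : seq A) (P : pset (size u + size u')), C u u' P -> k <= size u ->
  exists u1 u2 (P2 : pset (size u1 + size u2)), exists F : nat -> nat,
   [/\ C u1 u2 P2, u1 = drop k u, size u2 = k + size u' &
      [/\ (forall x, x < size u - k -> F x = x + k),
       (forall x, size u - k <= x < size u + size u' ->
          (F x < k) || (size u <= F x < size u + size u')) &
       (forall x y, x < size u + size u' -> y < size u + size u' ->
          same P2 x y = same P (F x) (F y))]].
Proof.
elim: k => [|k IH] u u' P HP Hk.
  exists u, u', P, id; split => //; first by rewrite drop0.
  split => //.
  - by move=> x; rewrite addn0.
  - by move=> x /andP[h1 h2]; rewrite subn0 in h1; rewrite h1 h2 orbT.
case: u P HP Hk => [|a u0] P HP Hk //.
have HP1 := cat_rot_ul HC HP.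
have Hk' : k <= size u0 by [].
have [u1 [u2 [P2 [F [C2 E1 S2 [F1 F2 F3]]]]]] := IH _ _ _ HP1 Hk.
pose G x := if x < size u0 then x.+1 else if x == size u0 then 0 else x.
exists u1, u2, P2, (fun x => G (F x)); split => //.
- by rewrite S2 /= addnS.
split.
- move=> x /= hx; rewrite subSS in hx; rewrite F1 // /G.
  have -> : x + k < size u0 by lia.
  by rewrite addnS.
- move=> x /= hx; rewrite subSS in hx.
  have := F2 x; rewrite /= => /(_ _)/Wrap[]; first lia.
  rewrite /G; case: ifP => h1; first by lia.
  case: eqP => h2; first by [].
  lia.
- move=> x y /= hx hy.
  have hPp := is_part_C HC HP.
  rewrite F3 /=; [|lia|lia].
  rewrite /rot_ul same_pull //; last first.
    move=> z hz; rewrite /=; case: ifP => h1; first lia.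
    case: eqP => h2; lia.
  have bF : forall z, z < size u0 + (size u').+1 -> F z < size u0 + (size u').+1.
    move=> z hz; case: (ltnP z (size u0 - k)) => hz2.
      by rewrite F1 //; lia.
    have := F2 z; rewrite /= => /(_ _)/Wrap[]; first lia.
    by move/orP=> [|/andP[]]; lia.
  rewrite bF; last lia.
  rewrite bF; last lia.
  done.
Qed.

Lemma iter_ur A inv (C : pcat_family A) (HC : category_of_nc_partitions inv C) k :
  forall (u u' : seq A) (P : pset (size u + size u')), C u u' P -> k <= size u ->
  exists u1 u2 (P2 : pset (size u1 + size u2)), exists F : nat -> nat,
   [/\ C u1 u2 P2, u1 = take (size u - k) u, size u2 = k + size u' &
      [/\ (forall x, x < size u - k -> F x = x),
       (forall x, size u - k <= x < size u + size u' ->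
          size u - k <= F x < size u + size u') &
       (forall x y, x < size u + size u' -> y < size u + size u' ->
          same P2 x y = same P (F x) (F y))]].
Proof.
elim: k => [|k IH] u u' P HP Hk.
  exists u, u', P, id; split => //; first by rewrite subn0 take_size.
have [u0 [a E]] : exists u0 a, u = u0 ++ [:: a].
  case/lastP: u P HP Hk => [|u0 a] //= P HP Hk.
  by exists u0, a; rewrite cats1.
subst u.
have su : size (u0 ++ [:: a]) = (size u0).+1 by rewrite cats1 size_rcons.
have su' : size (u' ++ [:: inv a]) = (size u').+1 by rewrite cats1 size_rcons.
have HP1 := cat_rot_ur HC HP.
have Hk' : k <= size u0 by lia.
have [u1 [u2 [P2 [F [C2 E1 S2 [F1 F2 F3]]]]]] := IH _ _ _ HP1 Hk'.
pose G x := if x < size u0 then x else if x < size u0 + size u' then x.+1 else size u0.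
exists u1, u2, P2, (fun x => G (F x)); split => //.
- by rewrite E1 su subSS takel_cat // leq_subr.
- by rewrite S2 su'; lia.
split.
- move=> x hx; rewrite F1; last lia.
  by rewrite /G; case: ifP => //; lia.
- move=> x hx.
  have := F2 x; rewrite su' => /(_ _)/Wrap[]; first lia.
  move=> /andP[h1 h2].
  rewrite /G; case: ifP => h3; first lia.
  case: ifP => h4; lia.
- move=> x y hx hy.
  have hPp := is_part_C HC HP.
  rewrite F3; [|lia|lia].
  rewrite /rot_ur same_pull //; last first.
    move=> z hz; case: ifP => h1; first lia.
    case: ifP => h2; lia.
  have bF : forall z, z < size u0 + size (u' ++ [:: inv a]) -> F z < size u0 + size (u' ++ [:: inv a]).
    move=> z hz; case: (ltnP z (size u0 - k)) => hz2.
      by rewrite F1 //; lia.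
    have := F2 z => /(_ _)/Wrap[]; first lia.
    by move/andP=> []; lia.
  rewrite bF; last lia.
  rewrite bF; last lia.
  done.
Qed.
Lemma comp_edge_sym A (w w' w'' : seq A) p q i j :
  comp_edge (w:=w) (w':=w') (w'':=w'') p q i j -> comp_edge p q j i.
Proof.
rewrite /comp_edge => /or4P[/and3P[h1 h2 h3]|/and3P[h1 h2 h3]|h|h].
- by rewrite h1 h2 (same_sym h3).
- by rewrite h1 h2 (same_sym h3) orbT.
- by rewrite h !orbT.
- by rewrite h !orbT.
Qed.

Lemma comp_self A (v u : seq A) (P : pset (size v + size u)) (r : nat -> nat -> bool) :
  is_part P ->
  (forall x y, x < size v -> y < size v -> same P x y = r x y) ->
  (forall x y, x < size v -> same P x y -> y < size v) ->
  part_comp (adjoint P) P = mkpart (size v + size v) (fun i j =>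
     if i < size v then (j < size v) && r i j
     else (size v <= j) && r (i - size v) (j - size v)).
Proof.
move=> hP H1 H2.
set s := size v; set m := size u.
have hs : s = size v := erefl. have hm : m = size u := erefl.
have sameA : forall x y, same (adjoint P) x y =
   [&& x < m + s, y < m + s &
       same P (if x < m then s + x else x - m) (if y < m then s + y else y - m)].
  move=> x y; rewrite /adjoint same_pull //.
  by move=> z hz; case: ifP => h; lia.
rewrite /part_comp; apply: mkpart_ext => i j.
have hi := ltn_ord i; have hj := ltn_ord j.
set N := (s + m + (m + s)).
have hN : N = s + m + (m + s) := erefl.
set g := fun x => if x < s then x else s + m + m + (x - s).
have gN : forall x, x < s + s -> g x < N by move=> x hx; rewrite /g; case: ifP; lia.
set e := fun a b : 'I_N => comp_edge P (adjoint P) a b.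
have -> : [exists x : 'I_N, exists y : 'I_N,
       [&& val x == g i, val y == g j & connect e x y]] =
    connect e (Ordinal (gN _ hi)) (Ordinal (gN _ hj)).
  apply/idP/idP.
    case/existsP=> x /existsP[y /and3P[/eqP ex /eqP ey c]].
    have -> : Ordinal (gN _ hi) = x by apply: val_inj.
    by have -> : Ordinal (gN _ hj) = y by apply: val_inj.
  move=> c; apply/existsP; exists (Ordinal (gN _ hi)); apply/existsP.
  by exists (Ordinal (gN _ hj)); rewrite /= !eqxx.
have esymm : forall a b, e a b -> e b a by move=> a b; apply: comp_edge_sym.
have closedK : forall K : {pred 'I_N}, (forall a b, e a b -> a \in K -> b \in K) ->
    closed e K.
  move=> K hK a b eab; apply/idP/idP; first exact: hK.
  by apply: hK; apply: esymm.
case: ifP => his.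
- apply/idP/idP.
  + pose K := [pred z : 'I_N | (nat_of_ord z < s) && same P i z].
    have cK : closed e K.
      apply: closedK => a b; rewrite /e /comp_edge !inE /= => eab /andP[ha hia].
      case/or4P: eab => [/and3P[_ _ hab]|/and3P[h1 _ _]|/and3P[h1 _ _]|/and3P[h4 _ /eqP h1]]; try lia.
      have hb := H2 _ _ ha hab.
      by rewrite hb (same_trans hP hia hab).
    move=> c; have Ki : Ordinal (gN _ hi) \in K.
      by rewrite inE /= /g his his same_refl //; lia.
    rewrite (closed_connect cK c) inE /= /g in Ki; case/andP: Ki => hgj.
    case: ifP hgj => hjs hgj; last lia.
    by rewrite H1.
  + case/andP=> hjs rij; apply: connect1.
    have gi : g i = i by rewrite /g his.
    have gj : g j = j by rewrite /g hjs.
    rewrite /e /comp_edge /= -/s -/m gi gj H1 // rij.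
    apply/orP; left; apply/and3P; split => //; lia.
- apply/idP/idP.
  + pose K := [pred z : 'I_N | (s + m + m <= nat_of_ord z) && same P (i - s) (nat_of_ord z - (s + m + m))].
    have cK : closed e K.
      apply: closedK => a b; rewrite /e /comp_edge !inE /= => eab /andP[ha hia].
      case/or4P: eab => [/and3P[h1 _ _]|/and3P[h1 h2 hab]|/and3P[_ h1 _]|/and3P[h4 h3 /eqP h1]]; try lia.
      move: hab; rewrite sameA => /and3P[_ _].
      have -> : (nat_of_ord a - (s + m) < m) = false by lia.
      case: ifP => hb hab.
        have ha2 := ltn_ord a; have := H2 _ _ _ hab; lia.
      have hb' : s + m + m <= nat_of_ord b by lia.
      rewrite hb' /=.
      have -> : nat_of_ord b - (s + m + m) = nat_of_ord b - (s + m) - m by lia.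
      apply: same_trans hP _ hab.
      by have <- : nat_of_ord a - (s + m + m) = nat_of_ord a - (s + m) - m by lia.
    move=> c; have Ki : Ordinal (gN _ hi) \in K.
      rewrite inE /= /g his.
      have -> : s + m + m + (i - s) - (s + m + m) = i - s by lia.
      by rewrite leq_addr same_refl //; lia.
    rewrite (closed_connect cK c) inE /= /g in Ki; case/andP: Ki => hgj.
    case: ifP hgj => hjs hgj; first lia.
    have -> : s + m + m + (j - s) - (s + m + m) = j - s by lia.
    rewrite H1 //; try lia.
  + case/andP=> hjs rij; apply: connect1.
    have gi : g i = s + m + m + (i - s) by rewrite /g his.
    have gj : g j = s + m + m + (j - s) by rewrite /g ltnNge hjs.
    rewrite /e /comp_edge /= -/s -/m gi gj.
    apply/orP; right; apply/orP; left; apply/and3P; split; try lia.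
    rewrite sameA.
    have -> : s + m + m + (i - s) - (s + m) = m + (i - s) by lia.
    have -> : s + m + m + (j - s) - (s + m) = m + (j - s) by lia.
    have -> : (m + (i - s) < m) = false by lia.
    have -> : (m + (j - s) < m) = false by lia.
    rewrite !addKn H1; try lia.
Qed.
Theorem proposition3p2 (A : Type) (inv : A -> A) (C : pcat_family A)
    (Hinv : involutive inv) (HC : category_of_nc_partitions inv C)
    (w : seq A) (p : pset (size w + size (@nil A)))
    (Hp : C w [::] p)
    (Q : {set {set 'I_(size w + size (@nil A))}}) (a b : nat)
    (HQ : full_subpartition_on p Q a b) :
  let v := take b.+1 (drop a w) in
  let q : pset (size v + size (@nil A)) := restrict_part _ Q a in
  C v v (part_comp (adjoint q) q).
Proof.
move=> v q.
case: HQ => QP hab covQ.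
have hp := is_part_C HC Hp.
have hab' : a + b < size w by move: hab; rewrite /= addn0.
have hptI : trivIset p by case/and3P: hp.
have sameQ : forall x y, a <= x <= a + b -> same Q x y = same p x y.
  move=> x y hx; apply/idP/idP.
    move/sameE=> [B [x' [y' [BQ xB yB ex ey]]]]; apply/sameE; exists B, x', y'.
    by split => //; apply: (subsetP QP).
  move/sameE=> [B [x' [y' [Bp xB yB ex ey]]]].
  have : x' \in cover Q by rewrite covQ inE ex.
  case/bigcupP=> B' BQ xB'.
  have eB : B = B' by rewrite -(def_pblock hptI Bp xB) (def_pblock hptI (subsetP QP _ BQ) xB').
  subst B'; apply/sameE; exists B, x', y'; done.
have intv : forall x y, a <= x <= a + b -> same p x y -> a <= y <= a + b.
  move=> x y hx; rewrite -sameQ //.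
  move/sameE=> [B [x' [y' [BQ xB yB ex ey]]]].
  have : y' \in cover Q by apply/bigcupP; exists B.
  by rewrite covQ inE ey.
have eqvQ : eqv b.+1 (fun x y => same Q (a + x) (a + y)).
  split.
  - move=> x hx; rewrite sameQ; last lia.
    apply: same_refl => //=; lia.
  - by move=> x y hx hy; apply: same_sym.
  - move=> x y z hx hy hz; rewrite !sameQ; try lia.
    exact: same_trans.
have sv : size v = b.+1 by rewrite /v size_takel // size_drop; lia.
have Rq : part_comp (adjoint q) q = mkpart (size v + size v) (fun i j =>
     if i < size v then (j < size v) && same Q (a + i) (a + j)
     else (size v <= j) && same Q (a + (i - size v)) (a + (j - size v))).
  apply: comp_self.
  - by rewrite /q /restrict_part; apply: mkpart_part; rewrite /= addn0 sv.
  - move=> x y hx hy; rewrite /q /restrict_part same_mkpart; last by rewrite /= addn0 sv.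
    by rewrite /= addn0 hx hy.
  - by move=> x y hx /same_lt[_]; rewrite /= addn0.
rewrite Rq.
have [u1 [u2 [P1 [F1 [C1 E1 S1 [G1 G2 G3]]]]]] :=
  iter_ur HC (k := size w - (a + b).+1) Hp (leq_subr _ _).
have s0 : size (@nil A) = 0 := erefl.
have su1 : size u1 = (a + b).+1 by rewrite E1 size_takel; lia.
have hp1 := is_part_C HC C1.
have [u3 [u4 [P2 [F2 [C2 E2 S3 [H1 H2 H3]]]]]] := iter_ul HC (k := a) C1 (ltac:(lia)).
have hP2 := is_part_C HC C2.
have Cv := cat_comp HC C2 (cat_adj HC C2).
have su3 : size u3 = b.+1 by rewrite E2 size_drop; lia.
have sP2 : forall x y, x < size u3 -> y < size u3 + size u4 ->
    same P2 x y = same p (a + x) (F1 (F2 y)).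
  move=> x y hx hy.
  have bF2 : F2 y < size u1 + size u2.
    case: (ltnP y (size u1 - a)) => hy2; first by rewrite H1 //; lia.
    have := H2 y => /(_ _)/Wrap[]; first lia.
    by case/orP; lia.
  rewrite H3; [|lia|lia].
  rewrite H1; last lia.
  rewrite G3; [|lia|lia].
  by rewrite G1 ?(addnC x a) //; lia.
rewrite (comp_self (r := fun x y => same Q (a + x) (a + y)) hP2) in Cv.
- have -> : v = u3 by rewrite E2 E1 /v take_drop; congr (drop a (take _ w)); lia.
  exact: Cv.
- move=> x y hx hy; rewrite sP2; [|lia|lia].
  rewrite H1; last lia.
  rewrite G1; last lia.
  rewrite (addnC y a) sameQ //; lia.
- move=> x y hx hxy.
  have [_ hy] := same_lt hxy.
  case: (ltnP y (size u3)) => // hy3.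
  move: hxy; rewrite sP2 // => hxy.
  have := intv _ _ _ hxy; rewrite /= => /(_ _)/Wrap[]; first lia.
  have := H2 y; rewrite /= => /(_ _)/Wrap[]; first lia.
  case/orP => hF2.
    by rewrite G1; lia.
  have := G2 (F2 y); rewrite /= => /(_ _)/Wrap[]; first lia.
  lia.
Qed.
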